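(* Let $n\ge1$, $h>0$, $\lambda>0$, and let $f:\mathbb{R}^n\to\mathbb{R}$ be a function whose modulus of continuity $\omega_f(t)=\sup\{|f(x)-f(y)|:x,y\in\mathbb{R}^n,\ |x-y|\le t\}$ satisfies $\omega_f(t)\le at+b$ for all $t\ge0$, with constants $a>0$, $b\ge0$. Then for every grid point $x_k\in h\mathbb{Z}^n$, $$\big|M^h_\lambda(f)(x_k)-M_\lambda(f)(x_k)\big|\le \omega_f(h\sqrt n)+2\lambda h^2 n+2h\sqrt\lambda\,d(\lambda),$$ where $d(\lambda)=\sqrt{\omega_f\big(a/\lambda+\sqrt{b/\lambda}\big)}$.
   Context: $M_\lambda(f)(x)=\inf_{y\in\mathbb{R}^n}\{f(y)+\lambda|y-x|^2\}$ is the lower Moreau envelope, and the discrete lower Moreau envelope at a grid point $x_k$ of the grid of size $h$ is $M^h_\lambda(f)(x_k)=\inf\{f(x_k+rh)+\lambda h^2|r|^2:\ r\in\mathbb{Z}^n\}$. Here $|\cdot|$ is the Euclidean norm. *)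

(* Defs.v *)
From HB Require Import structures.
From mathcomp Require Import all_boot all_order all_algebra.
From mathcomp Require Import all_classical all_reals all_analysis.
Set Implicit Arguments. Unset Strict Implicit. Unset Printing Implicit Defensive.
Import Order.TTheory GRing.Theory Num.Theory.
Local Open Scope classical_set_scope.
Local Open Scope ring_scope.

Definition enorm (R : realType) (n : nat) (v : 'rV[R]_n) : R :=
  Num.sqrt (\sum_(i < n) v ord0 i ^+ 2).

Definition zvec (R : realType) (n : nat) (r : 'rV[int]_n) : 'rV[R]_n :=
  map_mx (fun z : int => z%:~R) r.

Definition moreau (R : realType) (n : nat) (lam : R) (f : 'rV[R]_n -> R)
  (x : 'rV[R]_n) : R :=
  inf [set f y + lam * enorm (y - x) ^+ 2 | y in [set: 'rV[R]_n]].

Definition dmoreau (R : realType) (n : nat) (h lam : R) (f : 'rV[R]_n -> R)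
  (x : 'rV[R]_n) : R :=
  inf [set f (x + h *: zvec R r) + lam * h ^+ 2 * enorm (zvec R r) ^+ 2
      | r in [set: 'rV[int]_n]].

(* Modulus of continuity, valued in the extended reals (may be +oo a priori). *)
Definition modcont (R : realType) (n : nat) (f : 'rV[R]_n -> R) (t : R) : \bar R :=
  ereal_sup [set e : \bar R | exists x y : 'rV[R]_n,
    enorm (x - y) <= t /\ e = (`|f x - f y|)%:E].

(* Main.v *)
Require Import Defs.
From HB Require Import structures.
From mathcomp Require Import all_boot all_order all_algebra.
From mathcomp Require Import all_classical all_reals all_analysis.
From mathcomp Require Import lra.
Import Order.TTheory GRing.Theory Num.Theory.
Local Open Scope classical_set_scope.
Local Open Scope ring_scope.

Section H.
Variable R : realType.
Variable n : nat.

Lemma enorm_sq (v : 'rV[R]_n) : enorm v ^+ 2 = \sum_(i < n) v ord0 i ^+ 2.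
Proof. by rewrite /enorm sqr_sqrtr // sumr_ge0 // => i _; rewrite sqr_ge0. Qed.

Lemma enorm_ge0 (v : 'rV[R]_n) : 0 <= enorm v.
Proof. exact: sqrtr_ge0. Qed.

Lemma enormZ_sq (c : R) (v : 'rV[R]_n) : enorm (c *: v) ^+ 2 = c ^+ 2 * enorm v ^+ 2.
Proof.
rewrite !enorm_sq mulr_sumr; apply: eq_bigr => i _; by rewrite mxE exprMn.
Qed.

Lemma mc_le (f : 'rV[R]_n -> R) (a b t : R) u v :
  (forall t : R, 0 <= t -> (modcont f t <= (a * t + b)%:E)%E) -> 0 <= t ->
  enorm (u - v) <= t ->
  `|f u - f v| <= fine (modcont f t) /\ `|f u - f v| <= a * t + b.
Proof.
move=> Hm t0 huv.
have ub : ((`|f u - f v|)%:E <= modcont f t)%E.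
  by apply: ereal_sup_ubound; exists u, v.
have := Hm t t0; case E: (modcont f t) ub => [r| |] //=; rewrite ?lee_fin.
by move=> h1 h2; split => //; apply: le_trans h1 h2.
Qed.

Definition tr (c : R) : int := if 0 <= c then Num.floor c else - Num.floor (- c).

Lemma tr_prop c : (tr c)%:~R ^+ 2 <= c ^+ 2 /\ (c - (tr c)%:~R) ^+ 2 <= 1.
Proof.
rewrite /tr; case: ifP => hc.
- have h1 := floor_le c; have h2 := floorD1_gt c.
  have h3 : 0 <= (Num.floor c)%:~R :> R by rewrite ler0z floor_ge0.
  rewrite intrD in h2. split; nra.
- have h1 := floor_le (- c); have h2 := floorD1_gt (-c).
  have hc' : c < 0 by rewrite ltNge hc.
  have h3 : 0 <= (Num.floor (-c))%:~R :> R by rewrite ler0z floor_ge0 oppr_ge0 ltW.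
  rewrite intrD in h2. rewrite intrN. split; nra.
Qed.

Lemma lbS (f : 'rV[R]_n -> R) (lam a b : R) x :
  (forall t : R, 0 <= t -> (modcont f t <= (a * t + b)%:E)%E) -> 0 < lam ->
  lbound [set f y + lam * enorm (y - x) ^+ 2 | y in [set: 'rV[R]_n]] (f x - b - a * (a / lam)).
Proof.
move=> Hm hl _ [y _ <-].
have [_ h] := @mc_le f a b _ y x Hm (enorm_ge0 (y - x)) (lexx _).
have hc : lam * (a / lam) = a by rewrite mulrC divfK // gt_eqF.
set c := a / lam in hc *; set t := enorm (y - x) in h *.
have ht : 0 <= t := enorm_ge0 _.
rewrite -hc in h *. move: h; rewrite ler_norml => /andP[h1 h2].
have q1 : 0 <= lam * (t - c) ^+ 2 by rewrite mulr_ge0 ?sqr_ge0 ?ltW.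
have q2 : 0 <= lam * t ^+ 2 by rewrite mulr_ge0 ?sqr_ge0 ?ltW.
have q3 : 0 <= lam * c ^+ 2 by rewrite mulr_ge0 ?sqr_ge0 ?ltW.
nra.
Qed.
End H.

Theorem theorem4p2 (R : realType) (n : nat) (h lam a b : R)
  (f : 'rV[R]_n -> R) :
  (0 < n)%N -> 0 < h -> 0 < lam -> 0 < a -> 0 <= b ->
  (forall t : R, 0 <= t -> (modcont f t <= (a * t + b)%:E)%E) ->
  forall k : 'rV[int]_n,
    let xk := h *: zvec R k in
    `|dmoreau h lam f xk - moreau lam f xk|
      <= fine (modcont f (h * Num.sqrt n%:R))
         + 2 * lam * h ^+ 2 * n%:R
         + 2 * h * Num.sqrt lam
             * Num.sqrt (fine (modcont f (a / lam + Num.sqrt (b / lam)))).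
Proof.
move=> n0 h0 l0 a0 b0 Hm k /=; set xk := h *: zvec R k.
set S := [set f y + lam * enorm (y - xk) ^+ 2 | y in [set: 'rV[R]_n]].
set D := [set f (xk + h *: zvec R r) + lam * h ^+ 2 * enorm (zvec R r) ^+ 2
      | r in [set: 'rV[int]_n]].
have -> : moreau lam f xk = inf S by [].
have -> : dmoreau h lam f xk = inf D by [].
have lbS' := @lbS R n f lam a b xk Hm l0.
have DS : D `<=` S.
  move=> _ [r _ <-]; exists (xk + h *: zvec R r) => //.
  by rewrite addrAC subrr add0r enormZ_sq mulrA.
have hS : has_lbound S by exists (f xk - b - a * (a / lam)).
have hD : has_lbound D.
  by exists (f xk - b - a * (a / lam)) => z /DS; apply: lbS'.
have le1 : inf S <= inf D.
  apply: lb_le_inf.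
    by exists (f (xk + h *: zvec R (0 : 'rV[int]_n)) + lam * h ^+ 2 * enorm (zvec R (0 : 'rV[int]_n)) ^+ 2), 0.
  by move=> z /DS Sz; exact: ge_inf hS _ Sz.
have t0 : 0 <= h * Num.sqrt n%:R by rewrite mulr_ge0 ?sqrtr_ge0 ?ltW.
set w := fine (modcont f (h * Num.sqrt n%:R)).
have hw : 0 <= w.
  have e0 : enorm (xk - xk) <= h * Num.sqrt n%:R.
    rewrite subrr /enorm big1 ?sqrtr0 // => i _; by rewrite mxE expr0n.
  have [+ _] := @mc_le R n f a b _ xk xk Hm t0 e0.
  exact: le_trans.
have le2 : inf D - w <= inf S.
  apply: lb_le_inf; first by exists (f xk + lam * enorm (xk - xk) ^+ 2), xk.
  move=> _ [y _ <-].
  pose c := fun j : 'I_n => (y ord0 j - xk ord0 j) / h.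
  have ec : forall j, y ord0 j - xk ord0 j = h * c j.
    by move=> j; rewrite /c mulrC divfK // gt_eqF.
  pose r : 'rV[int]_n := \row_j @tr R (c j).
  pose z := xk + h *: zvec R r.
  have Dz : D (f z + lam * h ^+ 2 * enorm (zvec R r) ^+ 2) by exists r.
  have zx : lam * h ^+ 2 * enorm (zvec R r) ^+ 2 <= lam * enorm (y - xk) ^+ 2.
    rewrite -mulrA ler_pM2l // !enorm_sq mulr_sumr; apply: ler_sum => j _.
    rewrite !mxE. have [t1 _] := @tr_prop R (c j).
    have := ec j; rewrite !mxE => ->.
    by rewrite exprMn ler_pM2l // exprn_gt0.
  have zy : enorm (z - y) <= h * Num.sqrt n%:R.
    have -> : h * Num.sqrt n%:R = Num.sqrt (h ^+ 2 * n%:R).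
      by rewrite sqrtrM ?sqr_ge0 // sqrtr_sqr ger0_norm ?ltW.
    rewrite ler_wsqrtr //.
    have -> : h ^+ 2 * n%:R = \sum_(i < n) h ^+ 2.
      by rewrite sumr_const card_ord mulr_natr.
    apply: ler_sum => j _.
    have [_ t2] := @tr_prop R (c j).
    have := ec j; rewrite !mxE => e.
    set m := (@tr R (c j))%:~R in t2 *.
    rewrite (_ : _ - y ord0 j = - (h * (c j - m))); last first.
      by rewrite mulrBr -e; lra.
    by rewrite sqrrN exprMn ler_piMr // sqr_ge0.
  have [fz _] := @mc_le R n f a b _ z y Hm t0 zy.
  move: fz; rewrite ler_norml => /andP[_ fz].
  have hh : inf D <= f z + lam * h ^+ 2 * enorm (zvec R r) ^+ 2 := ge_inf hD Dz.
  rewrite -/w in fz; lra.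
have p1 : 0 <= 2 * lam * h ^+ 2 * n%:R.
  by apply: mulr_ge0 (ler0n _ _); apply: mulr_ge0 (sqr_ge0 _); apply: mulr_ge0 (ltW l0).
have p2 : 0 <= 2 * h * Num.sqrt lam
             * Num.sqrt (fine (modcont f (a / lam + Num.sqrt (b / lam)))).
  by apply: mulr_ge0 (sqrtr_ge0 _); apply: mulr_ge0 (sqrtr_ge0 _); apply: mulr_ge0 (ltW h0).
rewrite ger0_norm ?subr_ge0 //.
lra.
Qed.
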